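(* Let $\delta\ge1$ be an integer and $h\ge0$. Under the AMC-$h$ policy, for every characteristic function $v\in V_\delta$ and every arrival order $\pi$, the coalition structure $C_g$ formed by greedy players satisfies $|S|\le\left\lceil\frac{\delta\cdot\mathsf{min}}{\mathsf{min}+h}\right\rceil$ for every $S\in C_g$.
   Context: Players: a finite set $N=\{a_1,\dots,a_n\}$. A characteristic function is $v:2^N\to\mathbb{R}_{\ge 0}$ with $v(\emptyset)=0$. There are fixed constants $0<\mathsf{min}\le\mathsf{max}$ and $v$ is monotone and bounded: $\mathsf{min}\le v(S)\le v(T)\le\mathsf{max}$ for all nonempty $S\subseteq T\subseteq N$. $V_\delta$ is the set of such $v$ with $\delta\cdot\mathsf{min}\le\mathsf{max}<(\delta+1)\cdot\mathsf{min}$. Online process: an arrival order is a permutation $\pi=(\pi_1,\dots,\pi_n)$ of $N$; player $\pi_t$ arrives at time $t$; $\pi_{\prec t}$ is the set of players arriving before time $t$ and $\pi^{-1}(i)$ the arrival time of $i$. For $S\subseteq N$, $\pi_{|S}$ denotes the players of $S$ in the relative order of $\pi$. Let $C^{t-1}$ be the coalition structure of players arrived before time $t$ ($C^0=\emptyset$). At time $t$, player $\pi_t$ either joins an existing coalition $S\in C^{t-1}$ or forms $\{\pi_t\}$ (choice $S=\emptyset$); decisions are never revised. AMC-$h$ policy: when player $i$ joins coalition $S$, let $\mathsf{MC}_i=v((\pi_{\prec\pi^{-1}(i)}\cap S)\cup\{i\})-v(\pi_{\prec\pi^{-1}(i)}\cap S)$. If $\mathsf{MC}_i\le h$, all of $\mathsf{MC}_i$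 is added to the share of the last player of $S$ who arrived before $i$; if $\mathsf{MC}_i>h$, that previous player additionally receives $h$ and $i$ receives $\mathsf{MC}_i-h$; if $i$ is the first player of her coalition, the ''previous player'' is $i$ herself. Shares already assigned are never reduced; $\varphi_i(S,\pi_{|S})$ is $i$'s accumulated share when the coalition is $S$. Greedy players: $\pi_t$ chooses $S\in C^{t-1}\cup\{\emptyset\}$ maximizing $\varphi_{\pi_t}(S\cup\{\pi_t\},\pi_{|S\cup\{\pi_t\}})$ (predetermined tie-breaking); $C_g$ is the final structure after all $n$ arrivals. *)

(* Defs.v *)
From mathcomp Require Import all_boot all_order all_algebra.
Set Implicit Arguments. Unset Strict Implicit. Unset Printing Implicit Defensive.
Import Order.TTheory GRing.Theory Num.Theory.
Local Open Scope ring_scope.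

Section AMC.
Variables (R : realFieldType) (T : finType).

Definition char_fun (mn mx : R) (v : {set T} -> R) : Prop :=
  v set0 = 0 /\
  forall S S' : {set T}, S != set0 -> S \subset S' ->
    mn <= v S /\ v S <= v S' /\ v S' <= mx.

Definition in_V (delta : nat) (mn mx : R) (v : {set T} -> R) : Prop :=
  char_fun mn mx v /\ delta%:R * mn <= mx /\ mx < (delta.+1)%:R * mn.

(* A coalition is represented as the sequence of its members in arrival order
   (i.e. pi restricted to S).  [amc_gain v h p x i] is what player i receives
   under AMC-h when player x joins the coalition whose members so far are p.
   The "previous player" is last x p (= x itself when p is empty). *)
Definition amc_gain (v : {set T} -> R) (h : R) (p : seq T) (x i : T) : R :=
  let mc := v [set y in rcons p x] - v [set y in p] in
  (if i == last x p then Num.min mc h else 0)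
  + (if (i == x) && (h < mc) then mc - h else 0).

Definition amc_share (v : {set T} -> R) (h : R) (s : seq T) (i : T) : R :=
  \sum_(j < size s) amc_gain v h (take j s) (nth i s j) i.

(* Share of the arriving player x if she joins coalition c ([::] = new coalition). *)
Definition join_util v h (c : seq T) (x : T) : R := amc_share v h (rcons c x) x.

(* One greedy arrival: x picks a share-maximizing option among the existing
   coalitions and the empty choice; any maximizer may be picked (covers every
   predetermined tie-breaking rule). *)
Inductive greedy_step v h (CS : seq (seq T)) (x : T) : seq (seq T) -> Prop :=
| gs_new :
    (forall c, c \in CS -> join_util v h c x <= join_util v h [::] x) ->
    greedy_step v h CS x (rcons CS [:: x])
| gs_join (k : nat) :
    (k < size CS)%N ->
    join_util v h [::] x <= join_util v h (nth [::] CS k) x ->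
    (forall c, c \in CS -> join_util v h c x <= join_util v h (nth [::] CS k) x) ->
    greedy_step v h CS x (set_nth [::] CS k (rcons (nth [::] CS k) x)).

Inductive greedy_run v h : seq T -> seq (seq T) -> Prop :=
| gr_nil : greedy_run v h [::] [::]
| gr_snoc p x CS CS' :
    greedy_run v h p CS -> greedy_step v h CS x CS' ->
    greedy_run v h (rcons p x) CS'.

End AMC.

(* Main.v *)
Require Import Defs.
From mathcomp Require Import all_boot all_order all_algebra zify.
Import Order.TTheory GRing.Theory Num.Theory.
Local Open Scope ring_scope.

Section P.
Variables (R : archiRealFieldType) (T : finType) (v : {set T} -> R) (h : R).

Lemma ju_nil x : join_util v h [::] x = v [set y in [:: x]] - v [set y in [::]].
Proof.
rewrite /join_util /amc_share /= big_ord_recr big_ord0 /= /amc_gain /= !eqxx /=.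
set mc := (_ - _).
case: ifP => hm; rewrite add0r.
  by rewrite (min_r (ltW hm)) addrC subrK.
by rewrite min_l ?addr0 // leNgt hm.
Qed.

Lemma ju_cons ck x : ck != [::] -> x \notin ck ->
  join_util v h ck x =
  let mc := v [set y in rcons ck x] - v [set y in ck] in
  if h < mc then mc - h else 0.
Proof.
move=> ne xn; rewrite /join_util /amc_share size_rcons big_ord_recr /=.
rewrite big1 ?add0r.
  rewrite -cats1 take_size_cat // nth_cat ltnn subnn /=.
  rewrite /amc_gain eqxx /=.
  have -> : (x == last x ck) = false.
    case: ck ne xn => [//|a s] _ xn /=.
    apply/negbTE; apply: contra xn => /eqP ->; exact: mem_last.
  by rewrite add0r cats1.
move=> [j hj] _ /=.
rewrite /amc_gain -cats1 take_cat hj nth_cat hj.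
have hin : nth x ck j \in ck by apply: mem_nth.
have -> : (x == nth x ck j) = false.
  by apply/negbTE; apply: contra xn => /eqP ->.
have -> : (x == last (nth x ck j) (take j ck)) = false.
  apply/negbTE; apply: contra xn => /eqP ->.
  have := mem_last (nth x ck j) (take j ck); rewrite inE => /orP [/eqP -> //|].
  exact: mem_take.
by rewrite addr0.
Qed.

Variables (mn mx : R).
Hypothesis hmn : 0 < mn.
Hypothesis hh : 0 <= h.
Hypothesis hv : char_fun mn mx v.

Definition Inv (p : seq T) (CS : seq (seq T)) :=
  forall c, c \in CS -> [/\ c != [::], {subset c <= p} &
    mn + (size c - 1)%:R * (mn + h) <= v [set y in c]].

Lemma v_single x : mn <= v [set y in [:: x]].
Proof.
case: hv => _ H; have [] := H [set y in [:: x]] [set y in [:: x]] => //.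
by apply/set0Pn; exists x; rewrite !inE.
Qed.

Lemma set_nil : [set y in ([::] : seq T)] = set0.
Proof. by apply/setP => y; rewrite !inE. Qed.

Lemma run_inv p CS : uniq p -> greedy_run v h p CS -> Inv p CS.
Proof.
move=> up gr; elim: gr up => [|q x CS0 CS1 gr IH st] up.
  by move=> c.
rewrite rcons_uniq in up; case/andP: up => xn up.
have {}IH := IH up.
case: st.
- move=> _ c; rewrite mem_rcons inE => /orP [/eqP ->|cin].
    split => //.
      by move=> y; rewrite inE => /eqP ->; rewrite mem_rcons inE eqxx.
    by rewrite /= subnn mul0r addr0 v_single.
  have [c1 c2 c3] := IH c cin; split => //.
  by move=> y /c2 yp; rewrite mem_rcons inE yp orbT.
- move=> k hk hle _ c.
  rewrite set_nthE hk mem_cat inE => /orP [cin|/orP [/eqP ->|cin]].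
  + have [c1 c2 c3] := IH c (mem_take cin); split => //.
    by move=> y /c2 yp; rewrite mem_rcons inE yp orbT.
  + set ck := nth [::] CS0 k.
    have ckin : ck \in CS0 by apply: mem_nth.
    have [c1 c2 c3] := IH ck ckin.
    have xck : x \notin ck by apply: contra xn => /c2.
    move: hle; rewrite ju_nil (@ju_cons ck x c1 xck : join_util v h ck x = _) /= set_nil.
    case: hv => v0 _; rewrite v0 subr0.
    have := v_single x.
    case: ifP => hlt hs hle; last first.
      by exfalso; move: (le_lt_trans (le_trans hs hle) hmn); rewrite ltxx.
    split.
    * by rewrite -size_eq0 size_rcons.
    * move=> y; rewrite !mem_rcons !inE => /orP [->//|/c2 ->]; by rewrite orbT.
    * rewrite size_rcons subn1 /=.
      have hsz : (size ck = (size ck - 1).+1)%N.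
        by case: (ck) c1 => //= a s _; rewrite subn1.
      rewrite [in X in X%:R]hsz mulrSr.
      have e : v [set y in rcons ck x] =
        v [set y in ck] + (v [set y in rcons ck x] - v [set y in ck]) by rewrite addrC subrK.
      rewrite e; move: hle c3; set a := v [set y in ck]; set b := _ - a.
      move=> hle c3.
      have : mn + h <= b by rewrite -lerBrDr (le_trans hs hle).
      move=> hb.
      rewrite mulrDl mul1r addrA; exact: lerD.
  + have [c1 c2 c3] := IH c (mem_drop cin); split => //.
    by move=> y /c2 yp; rewrite mem_rcons inE yp orbT.
Qed.
End P.

Theorem lemma3 (R : archiRealFieldType) (T : finType) (mn mx h : R)
  (delta : nat) (v : {set T} -> R) (pi : seq T) (Cg : seq (seq T)) :
  0 < mn -> mn <= mx -> (1 <= delta)%N -> 0 <= h ->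
  in_V delta mn mx v ->
  perm_eq pi (enum T) ->
  greedy_run v h pi Cg ->
  forall S, S \in Cg ->
    (#|[set y in S]|%:Z <= Num.ceil (delta%:R * mn / (mn + h)))%R.
Proof.
move=> hmn _ _ hh [hv [_ hmx]] hperm gr S SC.
have up : uniq pi by rewrite (perm_uniq hperm) enum_uniq.
have [c1 _ c3] := @run_inv R T v h mn mx hmn hv pi Cg up gr S SC.
have vle : v [set y in S] <= mx.
  have ne : [set y in S] != set0.
    move: c1; case: S SC c3 => [|a s] _ _ _ //; apply/set0Pn; exists a; rewrite !inE; exact: mem_head.
  case: hv => _ H; have [_ [_ H2]] := H [set y in S] [set y in S] ne (subxx _).
  exact: H2.
have key : ((size S - 1)%:R : R) < delta%:R * mn / (mn + h).
  have hp : 0 < mn + h by rewrite ltr_wpDr.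
  rewrite ltr_pdivlMr //.
  have := le_lt_trans (le_trans c3 vle) hmx.
  by rewrite -[delta.+1]addn1 natrD mulrDl mul1r addrC ltrD2r.
have h1 : ((size S - 1)%:Z < Num.ceil (delta%:R * mn / (mn + h)))%R.
  rewrite -(ltr_int R); exact: lt_le_trans key (ceil_ge _).
have h2 := card_size S.
have h3 : (0 < size S)%N by rewrite lt0n size_eq0 c1.
rewrite cardsE.
move: h1 h2 h3; set c := Num.ceil _; set n := #|_|; set m := size S.
move=> h1 h2 h3; lia.
Qed.
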